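(* Let $\|\cdot\|$ be a norm on $\mathbb{R}^n$ such that its dual norm $\|\cdot\|^*$ is an algebra norm. Then $\|f\|\ge|\mathbb{E}_xf(x)|$ and $\|f\|^*\ge\|f\|_\infty$ for every $f\in\mathbb{R}^n$.
   Context: Functions in $\mathbb{R}^n$ are functions on $\{1,\dots,n\}$; $\mathbb{E}_x$ denotes $\frac1n\sum_x$, $\langle f,g\rangle=\mathbb{E}_xf(x)g(x)$, $\|f\|_\infty=\max_x|f(x)|$. The dual norm is $\|\phi\|^*=\max\{\langle f,\phi\rangle:\|f\|\le1\}$. An algebra norm is a norm $N$ on $\mathbb{R}^n$ with $N(fg)\le N(f)N(g)$ for all $f,g$ (pointwise product) and $N(\mathbf 1)=1$ for the constant function $\mathbf 1$. *)

(* Defs.v *)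
From mathcomp Require Import all_boot all_order all_algebra.
From mathcomp Require Import reals.
Set Implicit Arguments. Unset Strict Implicit. Unset Printing Implicit Defensive.
Import Order.TTheory GRing.Theory Num.Theory.
Local Open Scope ring_scope.

Section Defs.
Variables (R : realType) (n : nat).

Definition expect (f : 'I_n -> R) : R := (\sum_(x < n) f x) / n%:R.

Definition inner (f g : 'I_n -> R) : R := expect (fun x => f x * g x).

Definition supnorm (f : 'I_n -> R) : R := \big[Num.max/0]_(x < n) `|f x|.

Definition is_norm (N : ('I_n -> R) -> R) : Prop :=
  [/\ forall f, N f = 0 -> f = (fun _ => 0),
      forall (a : R) f, N (fun x => a * f x) = `|a| * N f
    & forall f g, N (fun x => f x + g x) <= N f + N g].

Definition is_dual_norm (N D : ('I_n -> R) -> R) : Prop :=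
  forall phi,
    (forall f, N f <= 1 -> inner f phi <= D phi) /\
    (exists f, N f <= 1 /\ inner f phi = D phi).

Definition is_algebra_norm (N : ('I_n -> R) -> R) : Prop :=
  [/\ is_norm N,
      forall f g, N (fun x => f x * g x) <= N f * N g
    & N (fun _ => 1) = 1].

End Defs.

(* Main.v *)
Require Import Defs.
From mathcomp Require Import all_boot all_order all_algebra.
From mathcomp Require Import reals.
From mathcomp Require Import ring lra.
From Stdlib Require Import FunctionalExtensionality.
Import Order.TTheory GRing.Theory Num.Theory.
Local Open Scope ring_scope.

Section Helpers.
Variables (R : realType) (n : nat).

Lemma norm_ge0 (N : ('I_n -> R) -> R) : is_norm N -> forall f, 0 <= N f.
Proof.
case=> _ hs ht f.
have e : (fun x => f x + (fun y => -1 * f y) x) = (fun x => 0 * f x).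
  by apply: functional_extensionality => x /=; rewrite mulN1r subrr mul0r.
have := ht f (fun y => -1 * f y); rewrite e !hs normr0 normrN normr1 mul0r mul1r.
lra.
Qed.

Lemma expect_scale (c : R) (f : 'I_n -> R) :
  expect (fun y => c * f y * 1) = c * expect f.
Proof.
rewrite /expect; under eq_bigr do rewrite mulr1.
by rewrite -mulr_sumr mulrA.
Qed.

Fixpoint hpow (h : 'I_n -> R) (k : nat) : 'I_n -> R :=
  match k with
  | 0%N => fun _ => 1
  | k'.+1 => fun y => h y * hpow h k' y
  end.

Lemma hpowE h k y : hpow h k y = h y ^+ k.
Proof. by elim: k => [|k IH] //=; rewrite IH exprS. Qed.

Lemma bern (r : R) (k : nat) : 1 <= r -> 1 + k%:R * (r - 1) <= r ^+ k.
Proof.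
move=> hr; elim: k => [|k IH]; first by rewrite mul0r addr0 expr0.
rewrite exprS -natr1.
have h0 : 0 <= k%:R :> R by apply: ler0n.
have h1 : 1 + k%:R * (r - 1) <= r ^+ k := IH.
have h4 : 0 <= k%:R * (r - 1) by apply: mulr_ge0; lra.
have h2 : 0 <= (r - 1) * (r ^+ k - 1) by apply: mulr_ge0; lra.
have h3 : r * r ^+ k = (r - 1) * (r ^+ k - 1) + r ^+ k + r - 1 by ring.
rewrite h3.
have h5 : k%:R * (r - 1) + (r - 1) = (k%:R + 1) * (r - 1) by ring.
lra.
Qed.

End Helpers.
Arguments hpow {R n} h k.
Arguments hpowE {R n} h k y.

Arguments expect_scale {R n} c f.

Theorem lemma4p2 (R : realType) (n : nat) (N D : ('I_n -> R) -> R) :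
  is_norm N -> is_dual_norm N D -> is_algebra_norm D ->
  forall f : 'I_n -> R, `|expect f| <= N f /\ supnorm f <= D f.
Proof.
move=> hN hdual hD f.
have [hDn hDm hD1] := hD.
have D0 := @norm_ge0 R n D hDn.
have N0 := @norm_ge0 R n N hN.
have [Nz Ns _] := hN.
split.
- have [Nf0|Nfp] := eqVneq (N f) 0.
    have -> : f = (fun _ => 0) by apply: Nz.
    by rewrite /expect big1 ?mul0r ?normr0 ?lexx.
  have Nfpos : 0 < N f by rewrite lt0r Nfp N0.
  have key : forall c, `|c| * N f <= 1 -> c * expect f <= 1.
    move=> c hc.
    have [h1 _] := hdual (fun _ => 1).
    have := h1 (fun y => c * f y); rewrite Ns => /(_ hc).
    by rewrite /inner expect_scale hD1.
  have k1 := key (N f)^-1.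
  have k2 := key (- (N f)^-1).
  rewrite normrN ger0_norm ?invr_ge0 ?N0 // mulVf // lexx in k1 k2.
  have e1 := k1 isT; have e2 := k2 isT.
  rewrite ler_norml; apply/andP; split.
  + rewrite mulNr in e2.
    have : expect f = N f * ((N f)^-1 * expect f) by rewrite mulrA mulfV // mul1r.
    move=> ->; rewrite -mulrN1 ler_pM2l //; lra.
  + have : expect f = N f * ((N f)^-1 * expect f) by rewrite mulrA mulfV // mul1r.
    move=> ->; rewrite -[X in _ <= X]mulr1 ler_pM2l //.
- rewrite /supnorm; apply: bigmax_le => // x _.
  pose dl := fun y : 'I_n => if y == x then 1 else 0 : R.
  have cpos : 0 < N dl.
    rewrite lt0r N0 andbT; apply/eqP => /Nz /(congr1 (fun g => g x)).
    by rewrite /dl eqxx => /eqP; rewrite oner_eq0.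
  set c := N dl in cpos.
  pose g := fun y => c^-1 * dl y.
  have Ng : N g <= 1.
    rewrite /g Ns ger0_norm; last by rewrite invr_ge0 ltW.
    by rewrite mulVf ?gt_eqF.
  have n0 : (0 < n)%N by apply: leq_ltn_trans (ltn_ord x).
  have nR : 0 < n%:R :> R by rewrite ltr0n.
  pose h := fun y => f y * f y.
  have Dh : D h <= D f ^+ 2 by rewrite expr2; apply: hDm.
  have Dpow : forall k, D (hpow h k) <= D h ^+ k.
    elim=> [|k IH]; first by rewrite /= hD1 expr0.
    rewrite exprS; apply: le_trans (hDm _ _) _.
    by apply: ler_pM => //; apply: D0.
  have low : forall k, h x ^+ k / (n%:R * c) <= D (hpow h k).
    move=> k; have [h1 _] := hdual (hpow h k).
    apply: le_trans (h1 g Ng); rewrite /inner /expect (bigD1 x) //= big1.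
      rewrite addr0 /g /dl eqxx mulr1 hpowE invfM le_eqVlt; apply/orP; left; apply/eqP; ring.
    by move=> y /negbTE hy; rewrite /g /dl hy mulr0 mul0r.
  have hx0 : 0 <= h x by rewrite /h -expr2 sqr_ge0.
  have Df0 := D0 f.
  have habs : h x = `|f x| ^+ 2 by rewrite real_normK ?num_real // expr2.
  have ab : forall k, h x ^+ k <= n%:R * c * (D f ^+ 2) ^+ k.
    move=> k; rewrite -ler_pdivrMl ?mulr_gt0 // mulrC.
    apply: le_trans (low k) _; apply: le_trans (Dpow k) _.
    apply: lerXn2r => //; rewrite ?nnegrE ?D0 //.
    by apply: exprn_ge0.
  have fin : h x <= D f ^+ 2.
    rewrite leNgt; apply/negP => hlt.
    have [b0|bp] := eqVneq (D f ^+ 2) 0.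
      have := ab 1%N; rewrite b0 expr0n /= mulr0 expr1 => hx.
      by rewrite b0 in hlt; lra.
    have bpos : 0 < D f ^+ 2 by rewrite lt0r bp sqr_ge0.
    set b := D f ^+ 2 in bpos bp hlt ab.
    set r := h x / b.
    have r1 : 1 < r by rewrite /r ltr_pdivlMr // mul1r.
    set M := n%:R * c / (r - 1).
    have M0 : 0 <= M by rewrite /M divr_ge0 // ?mulr_ge0 ?ltW // subr_gt0.
    have hk := archi_boundP M0.
    set k := Num.Def.archi_bound M in hk.
    have := ab k.
    have -> : h x = r * b by rewrite /r (divfK bp).
    rewrite exprMn => hh.
    have bk : 0 < b ^+ k by apply: exprn_gt0.
    have rk : r ^+ k <= n%:R * c by rewrite -(ler_pM2r bk).
    have := @bern R r k (ltW r1).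
    have : M * (r - 1) = n%:R * c by rewrite /M divfK // subr_eq0 gt_eqF.
    have r10 : 0 < r - 1 by rewrite subr_gt0.
    have hm : M * (r - 1) < k%:R * (r - 1) by rewrite ltr_pM2r.
    lra.
  rewrite habs in fin.
  rewrite leNgt; apply/negP => hlt.
  have : D f ^+ 2 < `|f x| ^+ 2 by rewrite ltrXn2r.
  lra.
Qed.
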